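(* Let $b_1,\dots,b_n\in\textsc{Xos}$ be valuations over $m$ items. Then for any partition $\mathbf{x}_1,\dots,\mathbf{x}_n\in\{0,1\}^m$ of the items (i.e. $\sum_i\mathbf{x}_i=\mathbf{1}$), $$\sum_i W^{\mathbf{b}_{-i}}(\mathbf{x}_i\mid\mathbf{1}-\mathbf{x}_i)\le 2\,W^{\mathbf{b}}(\mathbf{1}).$$
   Context: A valuation is $v:\{0,1\}^m\to\mathbb{R}_+$ with $v(\mathbf{0})=0$ and monotone; it is extended to $\mathbb{Z}^m_+$ by $v(\mathbf{x})=v(\min(\mathbf{x},\mathbf{1}))$. $v\in\textsc{Xos}$ if there is a set $I$ and vectors $\{\mathbf{w}_k\}_{k\in I}\subseteq\mathbb{R}^m_+$ with $v(\mathbf{x})=\max_{k\in I}\mathbf{w}_k\cdot\mathbf{x}$. For $\mathbf{x}\in\mathbb{Z}^m_+$: $W^{\mathbf{b}}(\mathbf{x})=\max\{\sum_k b_k(\mathbf{y}_k):\sum_k\mathbf{y}_k\le\mathbf{x},\mathbf{y}_k\in\{0,1\}^m\}$ and $W^{\mathbf{b}_{-i}}(\mathbf{x})=\max\{\sum_{k\ne i}b_k(\mathbf{y}_k):\sum_{k\ne i}\mathbf{y}_k\le\mathbf{x},\mathbf{y}_k\in\{0,1\}^m\}$. For a function $f$ on $\mathbb{Z}^m_+$, $f(\mathbf{y}\mid\mathbf{x})=f(\mathbf{y}+\mathbf{x})-f(\mathbf{x})$. *)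

(* Defs.v *)
From HB Require Import structures.
From mathcomp Require Import all_boot all_order all_algebra.
Set Implicit Arguments. Unset Strict Implicit. Unset Printing Implicit Defensive.
Import Order.TTheory GRing.Theory Num.Theory.
Local Open Scope ring_scope.

(* Items are 'I_m.  A 0/1 vector in {0,1}^m is identified with the set of its
   1-coordinates, a {set 'I_m}; a vector in Z^m_+ is a function 'I_m -> nat. *)

Definition valuation (R : realFieldType) (m : nat) (v : {set 'I_m} -> R) : Prop :=
  [/\ v set0 = 0, (forall S : {set 'I_m}, 0 <= v S) & (forall S T : {set 'I_m}, S \subset T -> v S <= v T)].

(* XOS: v(x) = max_{k in I} w_k . x  for some family of nonnegative vectors. *)
Definition xos (R : realFieldType) (m : nat) (v : {set 'I_m} -> R) : Prop :=
  valuation v /\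
  exists (I : Type) (w : I -> 'I_m -> R),
    (forall k j, 0 <= w k j) /\
    forall S : {set 'I_m},
      (forall k, \sum_(j in S) w k j <= v S) /\ (exists k, v S = \sum_(j in S) w k j).

(* W^b(x) = max { sum_k b_k(y_k) : sum_k y_k <= x, y_k in {0,1}^m }.
   All values are >= 0 and y = 0 is feasible, so a max with neutral 0 is exact. *)
Definition W (R : realFieldType) (n m : nat) (b : 'I_n -> {set 'I_m} -> R)
    (x : 'I_m -> nat) : R :=
  \big[Num.max/0]_(y : {ffun 'I_n -> {set 'I_m}} |
        [forall j, (\sum_(k < n) (j \in y k) <= x j)%N])
     \sum_(k < n) b k (y k).

Definition Wminus (R : realFieldType) (n m : nat) (b : 'I_n -> {set 'I_m} -> R)
    (i : 'I_n) (x : 'I_m -> nat) : R :=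
  \big[Num.max/0]_(y : {ffun 'I_n -> {set 'I_m}} |
        [forall j, (\sum_(k < n | k != i) (j \in y k) <= x j)%N])
     \sum_(k < n | k != i) b k (y k).

Definition marg (R : realFieldType) (m : nat) (f : ('I_m -> nat) -> R)
    (y x : 'I_m -> nat) : R :=
  f (fun j => (y j + x j)%N) - f x.

(* Main.v *)
Require Import Defs.
From HB Require Import structures.
From mathcomp Require Import all_boot all_order all_algebra.
Import Order.TTheory GRing.Theory Num.Theory.
Set Implicit Arguments. Unset Strict Implicit.
Local Open Scope ring_scope.

Section Aux.
Variable R : realFieldType.

Lemma le_bigmax0 (I : finType) (P : pred I) (F : I -> R) i :
  P i -> F i <= \big[Num.max/0]_(j | P j) F j.
Proof.
move=> Pi; rewrite unlock /reducebig.
have : i \in index_enum I by rewrite mem_index_enum.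
elim: (index_enum I) => //= a r IH; rewrite inE; case/orP=> [/eqP <-|ir].
  by rewrite Pi le_max lexx.
case: (P a); last exact: IH.
by rewrite le_max (IH ir) orbT.
Qed.

Lemma bigmax0_le (I : finType) (P : pred I) (F : I -> R) c :
  0 <= c -> (forall i, P i -> F i <= c) -> \big[Num.max/0]_(j | P j) F j <= c.
Proof.
move=> c0 H; elim/big_ind: _ => //.
by move=> x y xc yc; rewrite ge_max xc yc.
Qed.

Lemma bigmax0_attain (I : finType) (P : pred I) (F : I -> R) :
  \big[Num.max/0]_(j | P j) F j = 0 \/
  exists i, P i /\ \big[Num.max/0]_(j | P j) F j = F i.
Proof.
elim/big_ind: _ => [|x y Hx Hy|i Pi]; [by left| |by right; exists i].
rewrite maxEle; by case: ifP.
Qed.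
End Aux.

Lemma Wminus_le_W (R : realFieldType) n m (b : 'I_n -> {set 'I_m} -> R) i xx :
  (forall k, b k set0 = 0) -> 0 <= W b (fun _ => 1%N) ->
  (forall j, (xx j <= 1)%N) -> Wminus b i xx <= W b (fun _ => 1%N).
Proof.
move=> b0 W0 xx1; apply: bigmax0_le => // y /forallP Hy.
pose y' := [ffun k => if k == i then set0 else y k].
have -> : \sum_(k < n | k != i) b k (y k) = \sum_(k < n) b k (y' k).
  rewrite [RHS](bigD1 i) //= ffunE eqxx b0 add0r; apply: eq_bigr => k /negbTE ki.
  by rewrite ffunE ki.
apply: le_bigmax0; apply/forallP => j.
rewrite (bigD1 i) //= ffunE eqxx inE add0n.
under eq_bigr => k ki do rewrite ffunE (negbTE ki).
exact: leq_trans (Hy j) (xx1 j).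
Qed.

Lemma W_attain (R : realFieldType) n m (b : 'I_n -> {set 'I_m} -> R) :
  (forall k, b k set0 = 0) ->
  exists y : {ffun 'I_n -> {set 'I_m}},
    (forall j, (\sum_(k < n) (j \in y k) <= 1)%N) /\
    W b (fun _ => 1%N) = \sum_(k < n) b k (y k).
Proof.
move=> b0; case: (@bigmax0_attain R _
  (fun y : {ffun 'I_n -> {set 'I_m}} => [forall j, (\sum_(k < n) (j \in y k) <= 1)%N])
  (fun y => \sum_(k < n) b k (y k))) => [H|[y [/forallP Py H]]].
  exists [ffun => set0]; split.
    by move=> j; rewrite big1 // => k _; rewrite ffunE inE.
  by rewrite /W H big1 // => k _; rewrite ffunE b0.
by exists y.
Qed.

Lemma Wminus_lb (R : realFieldType) n m (b : 'I_n -> {set 'I_m} -> R) (i : 'I_n)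
   (xi : 'I_m -> nat) (ys : {ffun 'I_n -> {set 'I_m}}) (a : 'I_n -> 'I_m -> R) :
  (forall j, (xi j <= 1)%N) -> (forall j, (\sum_(k < n) (j \in ys k) <= 1)%N) ->
  (forall k (S : {set 'I_m}), \sum_(j in S) a k j <= b k S) ->
  \sum_(k < n | k != i) \sum_(j in ys k) (1 - xi j)%:R * a k j
    <= Wminus b i (fun j => (1 - xi j)%N).
Proof.
move=> xi1 ys1 ab.
pose X := [set j | xi j != 0%N].
pose y' := [ffun k => ys k :\: X].
apply: le_trans (@le_bigmax0 R _ (fun y : {ffun 'I_n -> {set 'I_m}} =>
   [forall j, (\sum_(k < n | k != i) (j \in y k) <= (1 - xi j))%N])
   (fun y => \sum_(k < n | k != i) b k (y k)) y' _); last first.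
  apply/forallP => j; case: (boolP (xi j == 0%N)) => [/eqP -> | xj].
    rewrite subn0; apply: leq_trans (ys1 j).
    rewrite [X in (_ <= X)%N](bigID (fun k => k != i)) /=.
    apply: leq_trans (leq_addr _ _); apply: leq_sum => k _.
    by rewrite ffunE in_setD; case: (j \in ys k); rewrite ?andbT ?andbF ?leq_b1.
  by rewrite big1 // => k _; rewrite ffunE in_setD inE xj.
apply: ler_sum => k _; apply: le_trans (ab k _); rewrite ffunE.
rewrite [X in X <= _]big_mkcond [X in _ <= X]big_mkcond /=.
apply: ler_sum => j _; rewrite in_setD inE.
have := xi1 j; case: (xi j) => [|[|//]] _ /=; case: (j \in ys k) => //=.
by rewrite subn0 mul1r.
by rewrite subnn mul0r.
Qed.

Theorem lemma3 (R : realFieldType) (n m : nat)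
    (b : 'I_n -> {set 'I_m} -> R) (x : 'I_n -> 'I_m -> nat) :
  (forall i, xos (b i)) ->
  (forall i j, (x i j <= 1)%N) ->
  (forall j, (\sum_(i < n) x i j)%N = 1%N) ->
  \sum_(i < n) marg (Wminus b i) (x i) (fun j => (1 - x i j)%N)
    <= 2 * W b (fun _ => 1%N).
Proof.
move=> hx x1 xs.
have b0 : forall k, b k set0 = 0 by move=> k; case: (hx k) => [[]].
have bge0 : forall k S, 0 <= b k S by move=> k S; case: (hx k) => [[_ ]].
have [ys [ys1 WE]] := W_attain b0.
have : forall k, exists a : 'I_m -> R, [/\ (forall j, 0 <= a j),
   (forall S : {set 'I_m}, \sum_(j in S) a j <= b k S) &
   b k (ys k) = \sum_(j in ys k) a j].
  move=> k; case: (hx k) => _ [I [w [w0 Hw]]].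
  have [_ [c Hc]] := Hw (ys k).
  by exists (w c); split => // S; case: (Hw S).
case/fin_all_exists => a Ha.
have a0 : forall k j, 0 <= a k j by move=> k j; case: (Ha k).
have ab : forall k (S : {set 'I_m}), \sum_(j in S) a k j <= b k S.
  by move=> k S; case: (Ha k) => _ H _.
set A := W b _.
have AE : A = \sum_(k < n) \sum_(j in ys k) a k j.
  by rewrite /A WE; apply: eq_bigr => k _; case: (Ha k).
have A0 : 0 <= A.
  by rewrite AE; apply: sumr_ge0 => k _; apply: sumr_ge0 => j _.
pose B i := \sum_(j in ys i) a i j + \sum_(k < n) \sum_(j in ys k) (x i j)%:R * a k j.
apply: (@le_trans _ _ (\sum_(i < n) B i)).
  apply: ler_sum => i _; rewrite /marg.
  have L := @Wminus_lb R n m b i (x i) ys a (x1 i) ys1 ab.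
  have U : Wminus b i (fun j => (x i j + (1 - x i j))%N) <= A.
    apply: Wminus_le_W => // j; by rewrite subnKC.
  apply: le_trans (lerB U L) _.
  rewrite lerBlDl AE /B addrA.
  have -> : \sum_(k < n) \sum_(j in ys k) a k j =
    \sum_(k < n) \sum_(j in ys k) (1 - x i j)%:R * a k j +
    \sum_(k < n) \sum_(j in ys k) (x i j)%:R * a k j.
    rewrite -big_split /=; apply: eq_bigr => k _.
    rewrite -big_split /=; apply: eq_bigr => j _.
    by rewrite -mulrDl -natrD subnK ?x1 // mul1r.
  rewrite lerD2r (bigD1 i) //= addrC lerD2l.
  apply: ler_sum => j _; rewrite -[X in _ <= X]mul1r ler_wpM2r //.
  by rewrite lern1 leq_subr.
rewrite /B big_split /= -AE.
have -> : \sum_(i < n) \sum_(k < n) \sum_(j in ys k) (x i j)%:R * a k j = A.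
  rewrite AE exchange_big /=; apply: eq_bigr => k _.
  rewrite exchange_big /=; apply: eq_bigr => j _.
  by rewrite -mulr_suml -natr_sum xs mul1r.
by rewrite mulrDl mul1r.
Qed.
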